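(* Assume $\|F\|<\frac{c_1}{2\sqrt{c_2c_3}}$. Then for every $\varepsilon\in(0,\varepsilon_0]$ the set $\mathbb D_\varepsilon$ is invariant for $S(t)$, i.e. $S(t)\mathbb D_\varepsilon\subset\mathbb D_\varepsilon$ for all $t\ge0$.
   Context: Let $\mathfrak I=(a,b)\subset\mathbb R$ be a bounded interval, $\mathcal H=L^2(\mathfrak I)$ with inner product $\langle\cdot,\cdot\rangle$ and norm $\|\cdot\|$. Let $A=-\partial_{xx}$ with domain $H^2(\mathfrak I)\cap H^1_0(\mathfrak I)$, $\lambda_1>0$ its first eigenvalue, $\mathcal H^r=D(A^{r/2})$, $\|u\|_r=\|A^{r/2}u\|$, $B=I+A$, and on $\mathcal H^r$ the inner product $(u,v)_r=\langle A^{(r-1)/2}B^{1/2}u,A^{(r-1)/2}B^{1/2}v\rangle$ with norm $|||u|||_r^2=\|u\|_{r-1}^2+\|u\|_r^2$. Set $\omega=\sqrt{(1+\lambda_1)/\lambda_1}$. Let $\mu:(0,\infty)\to[0,\infty)$, $\mu\not\equiv0$, nonincreasing, absolutely continuous, with $\kappa:=\int_0^\infty\mu(s)\,ds\in(0,\infty)$, $\int_0^\infty s\mu(s)\,ds=1$, $\lim_{s\to0^+}\mu(s)<\infty$, and $\mu'+\delta\mu\le0$ a.e. for some $\delta>0$. $\mathcal M=L^2_\mu(\mathbb R^+;\mathcal H^1)$ with norm $\|\eta\|_{\mathcal M}^2=\int_0^\infty\mu(s)\|\eta(s)\|_1^2ds$; $\mathbf H=\mathcal H^1\times\mathcal M$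 with $\|(u,\eta)\|_{\mathbf H}^2=|||u|||_1^2+\|\eta\|_{\mathcal M}^2$. $T\eta=-\partial_s\eta$ with domain $\{\eta\in\mathcal M:\partial_s\eta\in\mathcal M,\ \lim_{s\to0}\|\eta(s)\|_1=0\}$. For $f\in L^2(\mathfrak I)$, $S(t)$ is the strongly continuous semigroup on $\mathbf H$ generated by $Bu_t+u_x+\int_0^\infty\mu(s)A\eta(s)\,ds+uu_x=f$, $\eta_t=T\eta+u$ (Dirichlet conditions on $u$), $S(t)z=(u(t),\eta^t)$. Let $F(x)=\int_a^xf(y)\,dy$ and for $\varepsilon>0$, $z=(u,\eta)\in\mathbf H$, $$\Lambda_\varepsilon(z)=\|z\|_{\mathbf H}^2+\frac2\kappa\int_0^\infty\mu(s)\langle F,\eta_x(s)\rangle\,ds+\frac2\kappa\|F\|^2-\frac{\varepsilon}{\sqrt\kappa}\int_0^\infty\mu(s)(u,\eta(s))_1\,ds.$$ Let $c_1,c_2,c_3>0$ and $\varepsilon_0\in(0,\frac1{2\omega})$ be constants depending only on $\mathfrak I,\mu$ such that for every $z\in\mathbf H$ and $\varepsilon\in(0,\varepsilon_0]$, $\mathcal L_\varepsilon(t)=\Lambda_\varepsilon(S(t)z)$ satisfies $\mathcal L_\varepsilon'+\varepsilon c_1\mathcal L_\varepsilon\le c_2\|F\|^2+c_3\varepsilon^2\mathcal L_\varepsilon^2$ for all $t\ge0$. Set $c_*=\sqrt{c_2/c_3}\,\big(\frac{c_1}{\sqrt{c_2c_3}}-\|F\|\big)$ and, for $\varepsilon\in(0,\varepsilon_0]$,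 $\mathbb D_\varepsilon=\{z\in\mathbf H:\Lambda_\varepsilon(z)\le c_*/\varepsilon\}$. *)

(* Defs.v *)
From Stdlib Require Import Reals Lra.
From Coquelicot Require Import Coquelicot.
Open Scope R_scope.

Definition omega_const (lambda1 : R) : R := sqrt ((1 + lambda1) / lambda1).

Definition c_star (c1 c2 c3 normF : R) : R :=
  sqrt (c2 / c3) * (c1 / sqrt (c2 * c3) - normF).

Definition D_eps {H : Type} (Lambda : R -> H -> R) (c1 c2 c3 normF eps : R)
  (z : H) : Prop :=
  Lambda eps z <= c_star c1 c2 c3 normF / eps.

(* Main.v *)
Require Import Defs.
From Stdlib Require Import Reals Lra.
From Coquelicot Require Import Coquelicot.
Open Scope R_scope.

Lemma cstar_facts (c1 c2 c3 F : R) : 0 < c1 -> 0 < c2 -> 0 < c3 -> 0 <= F ->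
  F < c1 / (2 * sqrt (c2 * c3)) ->
  0 < c_star c1 c2 c3 F /\
  c2 * F ^ 2 + c3 * (c_star c1 c2 c3 F) ^ 2 - c1 * c_star c1 c2 c3 F <= 0.
Proof.
  intros H1 H2 H3 HF0 HF.
  unfold c_star.
  set (r := sqrt (c2 / c3)).
  assert (Hr : 0 < r) by (apply sqrt_lt_R0; apply Rdiv_lt_0_compat; lra).
  assert (Hrr : r * r = c2 / c3) by (apply sqrt_sqrt; apply Rlt_le, Rdiv_lt_0_compat; lra).
  assert (Hs : sqrt (c2 * c3) = r * c3).
  { replace (c2 * c3) with (c2 / c3 * (c3 * c3)) by (field; lra).
    rewrite sqrt_mult_alt by (apply Rlt_le, Rdiv_lt_0_compat; lra).
    rewrite sqrt_square by lra. reflexivity. }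
  rewrite Hs in HF |- *.
  assert (Hc2 : c2 = r * r * c3) by (rewrite Hrr; field; lra).
  assert (HF' : 2 * r * c3 * F < c1).
  { assert (E : c1 / (2 * (r * c3)) * (2 * (r * c3)) = c1) by (field; lra).
    apply (Rmult_lt_compat_r (2 * (r * c3))) in HF; [|nra]. lra. }
  replace (r * (c1 / (r * c3) - F)) with (c1 / c3 - r * F) by (field; lra).
  split.
  - assert (c1 / c3 > 2 * r * F).
    { apply (Rmult_lt_reg_r c3); [lra|].
      assert (E : c1 / c3 * c3 = c1) by (field; lra). lra. }
    nra.
  - rewrite Hc2.
    replace (r * r * c3 * F ^ 2 + c3 * (c1 / c3 - r * F) ^ 2 - c1 * (c1 / c3 - r * F))
      with (r * F * (2 * r * c3 * F - c1)) by (field; lra).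
    assert (0 <= r * F) by nra. nra.
Qed.

Theorem proposition8p4
  (H : Type) (S : R -> H -> H) (Lambda : R -> H -> R)
  (lambda1 c1 c2 c3 eps0 normF : R)
  (Hlambda1 : 0 < lambda1)
  (Hc1 : 0 < c1) (Hc2 : 0 < c2) (Hc3 : 0 < c3)
  (Heps0 : 0 < eps0 < 1 / (2 * omega_const lambda1))
  (HnormF : 0 <= normF)
  (HS0 : forall z, S 0 z = z)
  (HSsemi : forall t s z, 0 <= t -> 0 <= s -> S (t + s) z = S t (S s z))
  (* L_eps(t) = Lambda_eps(S(t)z) is right-continuous at 0 ... *)
  (Hcont0 : forall eps z, 0 < eps <= eps0 ->
     filterlim (fun t => Lambda eps (S t z)) (at_right 0) (locally (Lambda eps z)))
  (* ... and differentiable for t > 0 with the differential inequality *)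
  (Hdiff : forall eps z t, 0 < eps <= eps0 -> 0 < t ->
     exists d, is_derive (fun s => Lambda eps (S s z)) t d /\
       d + eps * c1 * Lambda eps (S t z)
         <= c2 * normF ^ 2 + c3 * eps ^ 2 * (Lambda eps (S t z)) ^ 2)
  (HF : normF < c1 / (2 * sqrt (c2 * c3))) :
  forall eps, 0 < eps <= eps0 ->
  forall t, 0 <= t ->
  forall z, D_eps Lambda c1 c2 c3 normF eps z ->
            D_eps Lambda c1 c2 c3 normF eps (S t z).
Proof.
  intros eps Heps t Ht z Hz. unfold D_eps in *.
  destruct (cstar_facts c1 c2 c3 normF Hc1 Hc2 Hc3 HnormF HF) as [Hcs Hq].
  set (cs := c_star c1 c2 c3 normF) in *.
  set (M := cs / eps) in *.
  assert (HM : 0 < M) by (apply Rdiv_lt_0_compat; lra).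
  assert (HqM : c2 * normF ^ 2 + c3 * eps ^ 2 * M ^ 2 - eps * c1 * M <= 0).
  { replace (c2 * normF ^ 2 + c3 * eps ^ 2 * M ^ 2 - eps * c1 * M)
      with (c2 * normF ^ 2 + c3 * cs ^ 2 - c1 * cs)
      by (unfold M; field; lra). lra. }
  set (L := fun s => Lambda eps (S s z)).
  change (L t <= M).
  assert (HL0 : L 0 <= M) by (unfold L; rewrite HS0; exact Hz).
  assert (Hrc : forall t0, 0 <= t0 -> forall e, 0 < e -> exists d, 0 < d /\
            forall s, t0 < s < t0 + d -> Rabs (L s - L t0) < e).
  { intros t0 Ht0 e He.
    pose proof (Hcont0 eps (S t0 z) Heps _ (locally_ball _ (mkposreal e He))) as Hb.
    destruct Hb as [d Hd]. exists d. split; [apply cond_pos|].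
    intros s Hs.
    assert (Hy : ball 0 d (s - t0)).
    { unfold ball; simpl; unfold AbsRing_ball, abs, minus, plus, opp; simpl.
      rewrite Ropp_0, Rplus_0_r, Rabs_right; lra. }
    specialize (Hd (s - t0) Hy ltac:(lra)).
    unfold ball in Hd; simpl in Hd; unfold AbsRing_ball, abs, minus, plus, opp in Hd; simpl in Hd.
    rewrite <- HSsemi in Hd by lra.
    replace (s - t0 + t0) with s in Hd by ring.
    exact Hd. }
  assert (Hder : forall c, 0 < c -> exists d, is_derive L c d /\
       d + eps * c1 * L c <= c2 * normF ^ 2 + c3 * eps ^ 2 * (L c) ^ 2).
  { intros c Hc. exact (Hdiff eps z c Heps Hc). }
  assert (Hct : forall c, 0 < c -> continuity_pt L c).
  { intros c Hc. destruct (Hder c Hc) as [d [Hd _]].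
    apply continuity_pt_filterlim. apply (ex_derive_continuous L c). exists d; exact Hd. }
  destruct (Rle_or_lt (L t) M) as [ok|Hgt]; [exact ok|exfalso].
  set (E := fun s => 0 <= s <= t /\ L s <= M).
  destruct (completeness E) as [t1 [Hub Hlub]].
  { exists t. intros s Hs. apply Hs. }
  { exists 0. split; [lra|exact HL0]. }
  assert (Ht1a : 0 <= t1) by (apply Hub; split; [lra|exact HL0]).
  assert (Ht1b : t1 <= t) by (apply Hlub; intros s Hs; apply Hs).
  assert (Hafter : forall s, t1 < s <= t -> M < L s).
  { intros s Hs. destruct (Rle_or_lt (L s) M) as [h|h]; [|exact h].
    assert (s <= t1) by (apply Hub; split; [lra|exact h]). lra. }
  assert (HLt1 : L t1 <= M).
  { destruct (Rle_or_lt (L t1) M) as [h|h]; [exact h|exfalso].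
    destruct (Req_dec t1 0) as [e0|e0].
    { rewrite e0 in h. lra. }
    assert (Hc := Hct t1 ltac:(lra)).
    destruct (proj1 (continuity_pt_locally L t1) Hc (mkposreal (L t1 - M) ltac:(lra))) as [d Hd].
    assert (t1 <= t1 - d / 2).
    { apply Hlub. intros s [Hs1 Hs2].
      assert (s <= t1) by (apply Hub; split; assumption).
      destruct (Rle_or_lt s (t1 - d/2)) as [h2|h2]; [exact h2|exfalso].
      assert (Hb : ball t1 d s).
      { unfold ball; simpl; unfold AbsRing_ball, abs, minus, plus, opp; simpl.
        pose proof (cond_pos d). rewrite Rabs_left1; lra. }
      specialize (Hd s Hb). simpl in Hd.
      apply Rabs_def2 in Hd. lra. }
    pose proof (cond_pos d). lra. }
  assert (Ht1t : t1 < t).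
  { destruct (Req_dec t1 t) as [e|e]; [rewrite e in HLt1; lra|lra]. }
  set (K := c3 * eps ^ 2 * (2 * M + 1)).
  assert (HK : 0 <= K).
  { unfold K. apply Rmult_le_pos; [apply Rmult_le_pos; [lra|apply pow2_ge_0]|lra]. }
  destruct (Hrc t1 Ht1a 1 ltac:(lra)) as [d1 [Hd1 Hd1']].
  set (b := t1 + Rmin d1 (t - t1) / 2).
  assert (Hmin1 : 0 < Rmin d1 (t - t1)) by (apply Rmin_pos; lra).
  assert (Hmin1a := Rmin_l d1 (t - t1)).
  assert (Hmin1b := Rmin_r d1 (t - t1)).
  assert (Hb1 : t1 < b) by (unfold b; lra).
  assert (Hb2 : b <= t) by (unfold b; lra).
  assert (Hb3 : b < t1 + d1) by (unfold b; lra).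
  set (phi := fun s => (L s - M) * exp (- K * s)).
  assert (HLb : M < L b) by (apply Hafter; lra).
  assert (Hphib : 0 < phi b).
  { unfold phi. apply Rmult_lt_0_compat; [lra|apply exp_pos]. }
  destruct (Hrc t1 Ht1a (phi b) Hphib) as [d2 [Hd2 Hd2']].
  set (a := t1 + Rmin d2 (b - t1) / 2).
  assert (Hmin2 : 0 < Rmin d2 (b - t1)) by (apply Rmin_pos; lra).
  assert (Hmin2a := Rmin_l d2 (b - t1)).
  assert (Hmin2b := Rmin_r d2 (b - t1)).
  assert (Ha1 : t1 < a) by (unfold a; lra).
  assert (Ha2 : a < b) by (unfold a; lra).
  assert (Ha3 : a < t1 + d2) by (unfold a; lra).
  assert (HLa : M < L a) by (apply Hafter; lra).
  assert (HLa2 : L a < M + phi b).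
  { specialize (Hd2' a ltac:(lra)). apply Rabs_def2 in Hd2'. lra. }
  assert (Hphia : phi a <= L a - M).
  { unfold phi. assert (exp (- K * a) <= 1).
    { rewrite <- exp_0. destruct (Req_dec (K * a) 0) as [e|e].
      - replace (- K * a) with 0 by lra. lra.
      - apply Rlt_le, exp_increasing. assert (0 <= K * a) by (apply Rmult_le_pos; lra). lra. }
    assert (0 < exp (- K * a)) by apply exp_pos. nra. }
  assert (Hdphi : forall x, 0 < x ->
     is_derive phi x ((Derive L x - K * (L x - M)) * exp (- K * x))).
  { intros x Hx. destruct (Hder x Hx) as [d [Hd _]].
    rewrite (is_derive_unique _ _ _ Hd).
    pose proof (is_derive_minus L (fun _ => M) x d zero Hd (is_derive_const M x)) as H1.
    assert (H2 : is_derive (fun s => exp (- K * s)) x (- K * exp (- K * x))).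
    { auto_derive; [exact I|ring]. }
    pose proof (is_derive_mult _ _ x _ _ H1 H2 Rmult_comm) as H3.
    replace ((d - K * (L x - M)) * exp (- K * x)) with
      (plus (mult (minus d zero) (exp (- K * x))) (mult (minus (L x) M) (- K * exp (- K * x)))).
    - exact H3.
    - unfold plus, mult, minus, opp, zero; simpl. unfold plus; simpl. ring. }
  destruct (MVT_gen phi a b (fun x => (Derive L x - K * (L x - M)) * exp (- K * x)))
    as [c [Hc Hmvt]].
  { intros x Hx. rewrite Rmin_left, Rmax_right in Hx by lra. apply Hdphi. lra. }
  { intros x Hx. rewrite Rmin_left, Rmax_right in Hx by lra.
    apply continuity_pt_filterlim. apply (ex_derive_continuous phi x).
    eexists. apply Hdphi. lra. }
  rewrite Rmin_left, Rmax_right in Hc by lra.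
  destruct (Hder c ltac:(lra)) as [d [Hd Hdi]].
  rewrite (is_derive_unique _ _ _ Hd) in Hmvt.
  assert (HLc1 : M < L c) by (apply Hafter; lra).
  assert (HLc2 : L c < M + 1).
  { specialize (Hd1' c ltac:(lra)). apply Rabs_def2 in Hd1'. lra. }
  assert (Hdc : d - K * (L c - M) <= 0).
  { assert (Eq : c2 * normF ^ 2 + c3 * eps ^ 2 * L c ^ 2 - eps * c1 * L c - K * (L c - M)
       = (c2 * normF ^ 2 + c3 * eps ^ 2 * M ^ 2 - eps * c1 * M)
         + (L c - M) * (c3 * eps ^ 2 * (L c - M - 1) - eps * c1)) by (unfold K; ring).
    assert (0 <= c3 * eps ^ 2) by (apply Rmult_le_pos; [lra|apply pow2_ge_0]).
    assert (0 < eps * c1) by nra.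
    assert ((L c - M) * (c3 * eps ^ 2 * (L c - M - 1) - eps * c1) <= 0).
    { assert (c3 * eps ^ 2 * (L c - M - 1) <= 0) by nra. nra. }
    lra. }
  assert (0 < exp (- K * c)) by apply exp_pos.
  assert ((d - K * (L c - M)) * exp (- K * c) * (b - a) <= 0).
  { assert ((d - K * (L c - M)) * exp (- K * c) <= 0) by nra. nra. }
  lra.
Qed.
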